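(* Let $m,n\in\mathbb{R}$ with $m\neq 0$, and let $(G_1,g,J)$ be the three-dimensional Lorentzian Lie group described in the context. Then $(G_1,g,J)$ admits no nonzero left-invariant Ricci collineation associated to the Yano connection $\nabla^{*}$: if $\xi=\lambda_1\overline{e}_1+\lambda_2\overline{e}_2+\lambda_3\overline{e}_3$ ($\lambda_i\in\mathbb{R}$ constants) satisfies $\mathrm{L}_{\xi}\overline{\mathrm{Ric}^{*}}=0$, then $\lambda_1=\lambda_2=\lambda_3=0$.
   Context: $G_1$ is a connected three-dimensional Lie group whose Lie algebra has a basis $\{\overline{e}_1,\overline{e}_2,\overline{e}_3\}$ (viewed as left-invariant vector fields) with $[\overline{e}_1,\overline{e}_2]=m\overline{e}_1-n\overline{e}_3$, $[\overline{e}_1,\overline{e}_3]=-m\overline{e}_1-n\overline{e}_2$, $[\overline{e}_2,\overline{e}_3]=n\overline{e}_1+m\overline{e}_2+m\overline{e}_3$. The metric $g$ is the left-invariant Lorentzian metric for which $\{\overline{e}_1,\overline{e}_2,\overline{e}_3\}$ is pseudo-orthonormal with $\overline{e}_3$ timelike: $g(\overline{e}_1,\overline{e}_1)=g(\overline{e}_2,\overline{e}_2)=1$, $g(\overline{e}_3,\overline{e}_3)=-1$, $g(\overline{e}_i,\overline{e}_j)=0$ for $i\neq j$. $J$ is the left-invariant product structure with $J\overline{e}_1=\overline{e}_1$, $J\overline{e}_2=\overline{e}_2$, $J\overline{e}_3=-\overline{e}_3$. With $\nabla^{LC}$ the Levi-Civita connection of $g$, the Yano connection is $\nabla^{*}_XY=\nabla^{LC}_XY-\frac12(\nabla^{LC}_YJ)JX-\frac14[(\nabla^{LC}_XJ)JY-(\nabla^{LC}_{JX}J)Y]$.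 Its curvature is $R^{*}(X,Y)Z=\nabla^{*}_X\nabla^{*}_YZ-\nabla^{*}_Y\nabla^{*}_XZ-\nabla^{*}_{[X,Y]}Z$, its Ricci tensor is $\mathrm{Ric}^{*}(X,Y)=-g(R^{*}(X,\overline{e}_1)Y,\overline{e}_1)-g(R^{*}(X,\overline{e}_2)Y,\overline{e}_2)+g(R^{*}(X,\overline{e}_3)Y,\overline{e}_3)$, and $\overline{\mathrm{Ric}^{*}}(X,Y)=\frac12(\mathrm{Ric}^{*}(X,Y)+\mathrm{Ric}^{*}(Y,X))$. For a left-invariant vector field $\xi$, $(\mathrm{L}_{\xi}\overline{\mathrm{Ric}^{*}})(X,Y)=\xi(\overline{\mathrm{Ric}^{*}}(X,Y))-\overline{\mathrm{Ric}^{*}}([\xi,X],Y)-\overline{\mathrm{Ric}^{*}}(X,[\xi,Y])$; $\xi$ is a left-invariant Ricci collineation (associated to $\nabla^{*}$) if $\mathrm{L}_{\xi}\overline{\mathrm{Ric}^{*}}=0$. *)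

(* Defs.v *)
From Stdlib Require Import Reals.
Open Scope R_scope.

(* The Lie algebra of G_1, identified with the space of left-invariant
   vector fields: X = c1 X * e1 + c2 X * e2 + c3 X * e3. *)
Record vec := mkV { c1 : R; c2 : R; c3 : R }.

Definition e1 : vec := mkV 1 0 0.
Definition e2 : vec := mkV 0 1 0.
Definition e3 : vec := mkV 0 0 1.

Definition vadd (X Y : vec) : vec := mkV (c1 X + c1 Y) (c2 X + c2 Y) (c3 X + c3 Y).
Definition vsub (X Y : vec) : vec := mkV (c1 X - c1 Y) (c2 X - c2 Y) (c3 X - c3 Y).
Definition vscal (a : R) (X : vec) : vec := mkV (a * c1 X) (a * c2 X) (a * c3 X).

Definition g (X Y : vec) : R := c1 X * c1 Y + c2 X * c2 Y - c3 X * c3 Y.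

(* Lie bracket, bilinear extension of
   [e1,e2] = m e1 - n e3, [e1,e3] = -m e1 - n e2, [e2,e3] = n e1 + m e2 + m e3. *)
Definition br (m n : R) (X Y : vec) : vec :=
  let a12 := c1 X * c2 Y - c2 X * c1 Y in
  let a13 := c1 X * c3 Y - c3 X * c1 Y in
  let a23 := c2 X * c3 Y - c3 X * c2 Y in
  vadd (vadd (vscal a12 (vsub (vscal m e1) (vscal n e3)))
             (vscal a13 (vsub (vscal (-m) e1) (vscal n e2))))
       (vscal a23 (vadd (vadd (vscal n e1) (vscal m e2)) (vscal m e3))).

(* Koszul formula for left-invariant fields:
   g(nabla_X Y, Z) = 1/2 (g([X,Y],Z) - g([Y,Z],X) + g([Z,X],Y)). *)
Definition koszul (m n : R) (X Y Z : vec) : R :=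
  / 2 * (g (br m n X Y) Z - g (br m n Y Z) X + g (br m n Z X) Y).

(* Levi-Civita connection: raise the index with the pseudo-orthonormal frame. *)
Definition nablaLC (m n : R) (X Y : vec) : vec :=
  mkV (koszul m n X Y e1) (koszul m n X Y e2) (- koszul m n X Y e3).

Definition J (X : vec) : vec := mkV (c1 X) (c2 X) (- c3 X).

Definition nablaJ (m n : R) (X Y : vec) : vec :=
  vsub (nablaLC m n X (J Y)) (J (nablaLC m n X Y)).

Definition nablaY (m n : R) (X Y : vec) : vec :=
  vsub (vsub (nablaLC m n X Y) (vscal (/ 2) (nablaJ m n Y (J X))))
       (vscal (/ 4) (vsub (nablaJ m n X (J Y)) (nablaJ m n (J X) Y))).

Definition curvY (m n : R) (X Y Z : vec) : vec :=
  vsub (vsub (nablaY m n X (nablaY m n Y Z)) (nablaY m n Y (nablaY m n X Z)))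
       (nablaY m n (br m n X Y) Z).

Definition RicY (m n : R) (X Y : vec) : R :=
  - g (curvY m n X e1 Y) e1 - g (curvY m n X e2 Y) e2 + g (curvY m n X e3 Y) e3.

Definition symRicY (m n : R) (X Y : vec) : R :=
  / 2 * (RicY m n X Y + RicY m n Y X).

(* Lie derivative of symRicY along a left-invariant xi, evaluated on
   left-invariant X, Y.  The term xi(symRicY(X,Y)) vanishes because
   symRicY(X,Y) is a constant function for left-invariant X, Y. *)
Definition LieSymRicY (m n : R) (xi X Y : vec) : R :=
  0 - symRicY m n (br m n xi X) Y - symRicY m n X (br m n xi Y).

(* xi is a left-invariant Ricci collineation (associated to the Yano connection):
   the tensor L_xi symRicY vanishes; being a tensor, it suffices (and is
   necessary) that it vanishes on all left-invariant fields. *)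
Definition ricci_collineation (m n : R) (xi : vec) : Prop :=
  forall X Y : vec, LieSymRicY m n xi X Y = 0.

(* Main.v *)
Require Import Defs.
From Stdlib Require Import Reals Lra Psatz.
Require Import Defs.
Open Scope R_scope.

Lemma br_eq m n X Y : br m n X Y =
  mkV ((1)*m*c1 X*c2 Y + (-1)*m*c2 X*c1 Y + (-1)*m*c1 X*c3 Y + (1)*m*c3 X*c1 Y + (1)*n*c2 X*c3 Y + (-1)*n*c3 X*c2 Y)
      ((-1)*n*c1 X*c3 Y + (1)*n*c3 X*c1 Y + (1)*m*c2 X*c3 Y + (-1)*m*c3 X*c2 Y)
      ((-1)*n*c1 X*c2 Y + (1)*n*c2 X*c1 Y + (1)*m*c2 X*c3 Y + (-1)*m*c3 X*c2 Y).
Proof.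
  unfold br, vadd, vsub, vscal, e1, e2, e3; cbn [c1 c2 c3]; f_equal; field.
Qed.

Lemma nablaLC_eq m n X Y : nablaLC m n X Y =
  mkV ((1)*m*c1 X*c2 Y + (-1)*m*c1 X*c3 Y + (-1/2)*n*c3 X*c2 Y + (1/2)*n*c2 X*c3 Y)
      ((1)*m*c2 X*c3 Y + (-1)*m*c1 X*c1 Y + (-1)*m*c3 X*c3 Y + (1/2)*n*c3 X*c1 Y + (-1/2)*n*c1 X*c3 Y)
      ((-1)*m*c3 X*c2 Y + (-1)*m*c1 X*c1 Y + (1)*m*c2 X*c2 Y + (1/2)*n*c2 X*c1 Y + (-1/2)*n*c1 X*c2 Y).
Proof.
  unfold nablaLC, koszul, g; rewrite !br_eq; unfold e1, e2, e3; cbn [c1 c2 c3]; f_equal; field.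
Qed.

Lemma nablaJ_eq m n X Y : nablaJ m n X Y =
  mkV ((2)*m*c1 X*c3 Y + (-1)*n*c2 X*c3 Y)
      ((-2)*m*c2 X*c3 Y + (2)*m*c3 X*c3 Y + (1)*n*c1 X*c3 Y)
      ((-2)*m*c3 X*c2 Y + (-2)*m*c1 X*c1 Y + (2)*m*c2 X*c2 Y + (1)*n*c2 X*c1 Y + (-1)*n*c1 X*c2 Y).
Proof.
  unfold nablaJ, vsub, J; rewrite !nablaLC_eq; cbn [c1 c2 c3]; f_equal; field.
Qed.

Lemma nablaY_eq m n X Y : nablaY m n X Y =
  mkV ((1)*m*c1 X*c2 Y + (-1)*n*c3 X*c2 Y + (1)*m*c3 X*c1 Y)
      ((-1)*m*c1 X*c1 Y + (1)*n*c3 X*c1 Y + (-1)*m*c3 X*c2 Y)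
      ((1)*n*c2 X*c1 Y + (-1)*n*c1 X*c2 Y + (1)*m*c2 X*c3 Y).
Proof.
  unfold nablaY, vsub, vscal, J; rewrite !nablaJ_eq, !nablaLC_eq; cbn [c1 c2 c3]; f_equal; field.
Qed.

Lemma curvY_eq m n X Y Z : curvY m n X Y Z =
  mkV ((-1)*m^2*c1 X*c3 Y*c2 Z + (1)*m^2*c3 X*c1 Y*c2 Z + (-1)*m^2*c1 X*c2 Y*c2 Z + (1)*m^2*c2 X*c1 Y*c2 Z + (-1)*n^2*c1 X*c2 Y*c2 Z + (1)*n^2*c2 X*c1 Y*c2 Z + (1)*m*n*c1 X*c2 Y*c1 Z + (-1)*m*n*c2 X*c1 Y*c1 Z + (-1)*m^2*c2 X*c3 Y*c1 Z + (1)*m^2*c3 X*c2 Y*c1 Z)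
      ((-3)*m^2*c1 X*c3 Y*c1 Z + (3)*m^2*c3 X*c1 Y*c1 Z + (1)*m^2*c1 X*c2 Y*c1 Z + (-1)*m^2*c2 X*c1 Y*c1 Z + (1)*n^2*c1 X*c2 Y*c1 Z + (-1)*n^2*c2 X*c1 Y*c1 Z + (-1)*m*n*c1 X*c2 Y*c2 Z + (1)*m*n*c2 X*c1 Y*c2 Z + (1)*m^2*c2 X*c3 Y*c2 Z + (-1)*m^2*c3 X*c2 Y*c2 Z)
      ((1)*m*n*c1 X*c3 Y*c3 Z + (-1)*m*n*c3 X*c1 Y*c3 Z + (-1)*m^2*c2 X*c3 Y*c3 Z + (1)*m^2*c3 X*c2 Y*c3 Z + (1)*m*n*c1 X*c2 Y*c2 Z + (-1)*m*n*c2 X*c1 Y*c2 Z).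
Proof.
  unfold curvY, vsub; rewrite !nablaY_eq, !br_eq; cbn [c1 c2 c3]; f_equal; ring.
Qed.

Lemma RicY_eq m n X Y : RicY m n X Y = (-1)*m^2*c2 X*c2 Y + (-1)*n^2*c2 X*c2 Y + (1)*m*n*c2 X*c1 Y + (-1)*m^2*c1 X*c1 Y + (-1)*n^2*c1 X*c1 Y + (1)*m*n*c1 X*c2 Y + (-1)*m*n*c1 X*c3 Y + (1)*m^2*c2 X*c3 Y.
Proof.
  unfold RicY, g; rewrite !curvY_eq; unfold e1, e2, e3; cbn [c1 c2 c3]; ring.
Qed.

Lemma symRicY_eq m n X Y : symRicY m n X Y = (-1)*m^2*c2 X*c2 Y + (-1)*n^2*c2 X*c2 Y + (1)*m*n*c2 X*c1 Y + (-1)*m^2*c1 X*c1 Y + (-1)*n^2*c1 X*c1 Y + (1)*m*n*c1 X*c2 Y + (-1/2)*m*n*c1 X*c3 Y + (1/2)*m^2*c2 X*c3 Y + (-1/2)*m*n*c3 X*c1 Y + (1/2)*m^2*c3 X*c2 Y.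
Proof.
  unfold symRicY; rewrite !RicY_eq; field.
Qed.

Ltac crunch := unfold LieSymRicY; rewrite !symRicY_eq, !br_eq; unfold e1, e2, e3; cbn [c1 c2 c3]; field.

Theorem theorem3p3 (m n : R) (hm : m <> 0) (l1 l2 l3 : R) :
  ricci_collineation m n (mkV l1 l2 l3) -> l1 = 0 /\ l2 = 0 /\ l3 = 0.
Proof.
  intro H.
  assert (E11 : -2*m^3*l2 + 2*m^3*l3 - m*n^2*l2 = 0).
  { rewrite <- (H e1 e1). crunch. }
  assert (E13 : -m^3*l1 + n^3*l2 = 0).
  { rewrite <- (H e1 e3). crunch. }
  assert (E22 : -m^3*l3 - m^2*n*l1 = 0).
  { rewrite <- (H e2 e2). crunch. }
  assert (E33 : m*n^2*l2 - m^3*l2 = 0).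
  { rewrite <- (H e3 e3). crunch. }
  assert (hm2 : m*m <> 0) by (apply Rmult_integral_contrapositive; auto).
  assert (F11 : (2*m^2+n^2)*l2 = 2*m^2*l3).
  { apply (Rmult_eq_reg_l m); [|exact hm]. lra. }
  assert (F22 : m*l3 = - n*l1).
  { apply (Rmult_eq_reg_l (m*m)); [|exact hm2]. lra. }
  assert (F33 : (n^2 - m^2)*l2 = 0).
  { apply (Rmult_eq_reg_l m); [|exact hm]. lra. }
  assert (hb : l2 = 0).
  { destruct (Rmult_integral _ _ F33) as [Hn|Hb]; [|exact Hb].
    assert (Hnm : n = m \/ n = -m).
    { assert ((n-m)*(n+m) = 0) by lra.
      destruct (Rmult_integral _ _ H0); [left|right]; lra. }
    assert (G : m^2 * (3*l2 - 2*l3) = 0) by nra.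
    assert (G' : 3*l2 = 2*l3).
    { destruct (Rmult_integral _ _ G) as [G1|G1]; [|lra].
      exfalso; apply hm2; simpl in G1; lra. }
    destruct Hnm as [-> | ->].
    - assert (m^3*(l2 - l1) = 0) by nra.
      assert (l2 = l1).
      { destruct (Rmult_integral _ _ H0) as [G1|G1]; [|lra].
        exfalso; exact (pow_nonzero m 3 hm G1). }
      assert (m*(l3+l1) = 0) by nra.
      destruct (Rmult_integral _ _ H2); [contradiction|lra].
    - assert (m^3*(l1 + l2) = 0) by nra.
      assert (l1 = - l2).
      { destruct (Rmult_integral _ _ H0) as [G1|G1]; [|lra].
        exfalso; exact (pow_nonzero m 3 hm G1). }
      assert (m*(l3-l1) = 0) by nra.
      destruct (Rmult_integral _ _ H2); [contradiction|lra]. }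
  subst l2.
  assert (hc : l3 = 0).
  { assert (m*m*l3 = 0) by nra.
    destruct (Rmult_integral _ _ H0); [contradiction|lra]. }
  subst l3.
  assert (m*m*(m*l1) = 0) by nra.
  destruct (Rmult_integral _ _ H0); [contradiction|].
  destruct (Rmult_integral _ _ H1); [contradiction|].
  lra.
Qed.
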